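(* Let $K$ be a field of characteristic $0$, $r\ge1$ an integer, $d$ the derivation of $K[a]$ with $d(a)=a^r$, and let $A=K[a][b;d]$ be the Ore extension, so $pb=bp+d(p)$ for $p\in K[a]$ (in particular $ab=ba+a^r$). Let $w=a$, which is normal, with associated automorphism $\sigma$ ($wy=\sigma(y)w$ for all $y\in A$) given by $\sigma(a)=a$, $\sigma(b)=b+a^{r-1}$. Let $J=A(a-1)$ and $x=b-1$, and $N=A/Ax$. Then: (a) $J$ is a maximal left ideal of $A$, and for every $m\ge 0$ there is no $c\in A$ with $\sigma^m(x)c-1\in J$; (b) $N$ is not artinian, and its nonzero submodules are exactly the modules $a^mN$, $m\ge0$, which form a strictly descending chain $N\supsetneq aN\supsetneq a^2N\supsetneq\cdots$; (c) the submodules $a^mN$ ($m\ge 0$) of $N$ are pairwise non-isomorphic. *)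

(* Defs.v *)
From HB Require Import structures.
From mathcomp Require Import all_boot all_order all_algebra.
Set Implicit Arguments. Unset Strict Implicit. Unset Printing Implicit Defensive.
Import Order.TTheory GRing.Theory Num.Theory.
Local Open Scope ring_scope.

(* The element  sum_j b^j p_j(a)  of A attached to p = sum_j p_j Y^j in K[a][Y]
   (coefficients p_j in K[a] = {poly K}, evaluated at a in the K-algebra A). *)
Definition ore_elt (K : fieldType) (A : algType K) (a b : A)
  (p : {poly {poly K}}) : A :=
  \sum_(j < size p) b ^+ j * horner_alg a p`_j.

(* A is the Ore extension K[a][b; d] with d(a) = a^r: A is a K-algebra in
   which a b = b a + a^r, and every element is uniquely of the form
   sum_j b^j p_j(a) with p_j in K[a]. *)
Definition is_ore_ext (K : fieldType) (r : nat) (A : algType K) (a b : A) :=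
  a * b = b * a + a ^+ r /\
  injective (ore_elt a b) /\ (forall y : A, exists p, y = ore_elt a b p).

Definition left_ideal (A : pzRingType) (I : A -> Prop) :=
  I 0 /\ (forall u v, I u -> I v -> I (u + v)) /\ (forall c u, I u -> I (c * u)).

Definition maximal_left_ideal (A : pzRingType) (I : A -> Prop) :=
  left_ideal I /\ ~ I 1 /\
  forall I' : A -> Prop, left_ideal I' -> (forall u, I u -> I' u) ->
    (forall u, I' u <-> I u) \/ (forall u, I' u).

Definition lprinc (A : pzRingType) (y : A) : A -> Prop :=
  fun u => exists c, u = c * y.

Definition submodule (A : pzRingType) (N : lmodType A) (S : N -> Prop) :=
  S 0 /\ (forall u v, S u -> S v -> S (u + v)) /\ (forall c u, S u -> S (c *: u)).

Definition artinian (A : pzRingType) (N : lmodType A) :=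
  forall C : nat -> N -> Prop, (forall k, submodule (C k)) ->
    (forall k u, C k.+1 u -> C k u) ->
    exists k0, forall k, (k0 <= k)%N -> forall u, C k u <-> C k0 u.

Definition smul_sub (A : pzRingType) (N : lmodType A) (y : A) : N -> Prop :=
  fun u => exists v, u = y *: v.

Definition submod_iso (A : pzRingType) (N : lmodType A) (S T : N -> Prop) :=
  exists f : N -> N,
    (forall u v, S u -> S v -> f (u + v) = f u + f v) /\
    (forall c u, S u -> f (c *: u) = c *: f u) /\
    (forall u, S u -> T (f u)) /\
    (forall u v, S u -> S v -> f u = f v -> u = v) /\
    (forall w, T w -> exists u, S u /\ f u = w).

(* N together with e (the class of 1) is the cyclic module A / A y *)
Definition is_quot_by (A : pzRingType) (N : lmodType A) (y : A) (e : N) :=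
  (forall n : N, exists c : A, n = c *: e) /\
  (forall c : A, c *: e = 0 <-> lprinc y c).

(* Main.v *)
Require Import Defs.
From HB Require Import structures.
From mathcomp Require Import all_boot all_order all_algebra.
Import Order.TTheory GRing.Theory Num.Theory.
Local Open Scope ring_scope.
From mathcomp Require Import zify.
From Stdlib Require Import Classical.
Set Implicit Arguments. Unset Strict Implicit.

Section Ore.
Variable (K : fieldType) (r : nat) (A : algType K) (a b : A).
Hypothesis hK : [pchar K] =i pred0.
Hypothesis hr : (1 <= r)%N.
Hypothesis hab : a * b = b * a + a ^+ r.
Hypothesis hinj : injective (ore_elt a b).
Hypothesis hsurj : forall y : A, exists p, y = ore_elt a b p.

Local Notation pa := (horner_alg a).
Local Notation pb := (horner_alg b).
Local Notation oe := (ore_elt a b).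

Lemma oeE n (p : {poly {poly K}}) : (size p <= n)%N -> oe p = \sum_(j < n) b ^+ j * pa p`_j.
Proof.
move=> hn; rewrite /ore_elt (big_ord_widen n (fun j => b ^+ j * pa p`_j) hn).
rewrite big_mkcond /=; apply: eq_bigr => i _.
case: ifP => // /negbT; rewrite -leqNgt => hi.
by rewrite nth_default // rmorph0 mulr0.
Qed.

Lemma oeD (p q : {poly {poly K}}) : oe (p + q) = oe p + oe q.
Proof.
have h1 : (size p <= maxn (size p) (size q))%N by apply: leq_maxl.
have h2 : (size q <= maxn (size p) (size q))%N by apply: leq_maxr.
have h3 : (size (p + q)%R <= maxn (size p) (size q))%N by apply: size_polyD.
rewrite (oeE h1) (oeE h2) (oeE h3) -big_split /=; apply: eq_bigr => i _.
by rewrite coefD rmorphD mulrDr.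
Qed.

Lemma oeN (p : {poly {poly K}}) : oe (- p) = - oe p.
Proof.
have h1 : (size (- p)%R <= size p)%N by rewrite size_polyN.
rewrite (oeE h1) /ore_elt -sumrN; apply: eq_bigr => i _.
by rewrite coefN rmorphN mulrN.
Qed.

Lemma oe0 : oe (0 : {poly {poly K}}) = 0.
Proof. by rewrite /ore_elt size_poly0 big_ord0. Qed.

Lemma oeC (s : {poly K}) : oe s%:P = pa s.
Proof.
have h1 : (size s%:P <= 1)%N by rewrite size_polyC leq_b1.
by rewrite (oeE h1) big_ord1 coefC /= expr0 mul1r.
Qed.

Lemma oeMr (p : {poly {poly K}}) (s : {poly K}) : oe (map_poly (fun q => q * s) p) = oe p * pa s.
Proof.
have h1 : (size (map_poly (fun q => q * s)%R p) <= size p)%N.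
  apply/leq_sizeP => j hj; rewrite coef_map_id0 ?mul0r //.
  by rewrite nth_default ?mul0r.
rewrite (oeE h1) /ore_elt mulr_suml; apply: eq_bigr => i _.
by rewrite coef_map_id0 ?mul0r // rmorphM mulrA.
Qed.

Lemma oeMX (p : {poly {poly K}}) : oe (p * 'X) = b * oe p.
Proof.
have h1 : (size (p * 'X)%R <= (size p).+1)%N.
  apply/leq_sizeP => -[|j] hj; rewrite coefMX //=.
  by rewrite nth_default.
rewrite (oeE h1) big_ord_recl coefMX /= rmorph0 mulr0 add0r /ore_elt mulr_sumr.
by apply: eq_bigr => i _; rewrite coefMX /= exprS mulrA.
Qed.

Lemma CP (p : {poly K}) : pa p * b = b * pa p + pa ('X ^+ r * p^`()).
Proof.
elim/poly_ind: p => [|p c IH]; first by rewrite !rmorph0 mul0r mulr0 deriv0 mulr0 rmorph0 addr0.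
rewrite derivMXaddC !rmorphD !rmorphM /= horner_algX horner_algC rmorphXn /= horner_algX.
rewrite mulrDl -mulrA hab mulrDr mulrA IH mulrDl.
have cm : forall q, pa q * a ^+ r = a ^+ r * pa q.
  move=> q; have h1 : pa (q * 'X ^+ r) = pa q * a ^+ r.
    by rewrite rmorphM /= rmorphXn /= horner_algX.
  have h2 : pa ('X ^+ r * q) = a ^+ r * pa q.
    by rewrite rmorphM /= rmorphXn /= horner_algX.
  by rewrite -h1 -h2 mulrC.
have e1 : pa ('X^r * p^`()) * a = a ^+ r * pa (p^`() * 'X).
  have h1 : pa ('X^r * p^`() * 'X) = pa ('X^r * p^`()) * a.
    by rewrite rmorphM /= horner_algX.
  have h2 : pa ('X ^+ r * (p^`() * 'X)) = a ^+ r * pa (p^`() * 'X).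
    by rewrite rmorphM /= rmorphXn /= horner_algX.
  by rewrite -h1 -h2 mulrA.
rewrite e1 cm rmorphD mulrDr mulrDr (mulrA b) mulr_algl mulr_algr.
rewrite -!addrA; congr (_ + _).
by rewrite addrA [RHS]addrC; congr (_ + _); rewrite addrC.
Qed.


Local Notation J := (lprinc (a - 1)).

Lemma J0 : J 0. Proof. by exists 0; rewrite mul0r. Qed.
Lemma JD u v : J u -> J v -> J (u + v).
Proof. by move=> [c ->] [d ->]; exists (c + d); rewrite mulrDl. Qed.
Lemma JM c u : J u -> J (c * u).
Proof. by move=> [d ->]; exists (c * d); rewrite mulrA. Qed.
Lemma JN u : J u -> J (- u).
Proof. move=> hu; have -> : - u = (-1) * u by rewrite mulN1r.
by apply: JM. Qed.
Lemma JB u v : J u -> J v -> J (u - v).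
Proof. by move=> hu hv; apply: JD => //; apply: JN. Qed.
Lemma JZ (c : K) u : J u -> J (c *: u).
Proof. by move=> hu; rewrite -mulr_algl; apply: JM. Qed.
Lemma Jsum (I : finType) (F : I -> A) : (forall i, J (F i)) -> J (\sum_i F i).
Proof.
move=> hF; apply: (big_ind J) => //; [exact: J0 | exact: JD].
Qed.

Lemma paXsub1 : pa ('X - 1) = a - 1.
Proof. by rewrite rmorphB /= horner_algX rmorph1. Qed.

Lemma Jpa (s : {poly K}) : J (pa s - (s.[1]) %:A).
Proof.
have hd : ('X - (1 : K)%:P) %| (s - (s.[1])%:P).
  by rewrite dvdp_XsubCl /root hornerD hornerN hornerC subrr.
exists (pa ((s - (s.[1])%:P) %/ ('X - (1 : K)%:P))).
by rewrite -paXsub1 -polyC1 -rmorphM /= divpK // rmorphB /= horner_algC.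
Qed.

Lemma pbcomm (f : {poly K}) : pb f * b = b * pb f.
Proof.
have h1 : pb (f * 'X) = pb f * b by rewrite rmorphM /= horner_algX.
have h2 : pb ('X * f) = b * pb f by rewrite rmorphM /= horner_algX.
by rewrite -h1 -h2 mulrC.
Qed.

Lemma pbE (f : {poly K}) : pb f = oe (map_poly polyC f).
Proof.
elim/poly_ind: f => [|f c IH]; first by rewrite rmorph0 rmorph0 oe0.
rewrite rmorphD rmorphM /= horner_algX horner_algC.
rewrite rmorphD rmorphM /= map_polyX map_polyC /= oeD oeMX oeC horner_algC.
by rewrite -IH pbcomm.
Qed.

Lemma K1 (f : {poly K}) : J (pb f) -> f = 0.
Proof.
move=> [c hc]; have [q hq] := hsurj c.
move: hc; rewrite hq -paXsub1 -oeMr pbE => /hinj hf.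
apply/polyP => j; rewrite coef0.
have := congr1 (fun P : {poly {poly K}} => (P`_j).[1]) hf => /=.
rewrite coef_map /= coef_map_id0 ?mul0r // hornerC hornerM.
by rewrite hornerD hornerN hornerX hornerC subrr mulr0.
Qed.

Lemma K2 (y : A) : exists f, J (y - pb f).
Proof.
have [p ->] := hsurj y.
exists (\sum_(j < size p) (p`_j).[1] *: 'X^j).
rewrite rmorph_sum /ore_elt -sumrB; apply: Jsum => j.
rewrite -mul_polyC rmorphM /= horner_algC rmorphXn /= horner_algX mulr_algl.
rewrite -mulr_algr -mulrBr.
by apply: JM; apply: Jpa.
Qed.


Definition Low n (y : A) := exists h : {poly K}, (size h <= n)%N /\ J (y - pb h).

Lemma pbZ (c : K) (h : {poly K}) : pb (c *: h) = c *: pb h.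
Proof. by rewrite -mul_polyC rmorphM /= horner_algC mulr_algl. Qed.

Lemma pbD (g h : {poly K}) : pb (g + h) = pb g + pb h.
Proof. exact: rmorphD. Qed.

Lemma LowD n y z : Low n y -> Low n z -> Low n (y + z).
Proof.
move=> [h1 [s1 j1]] [h2 [s2 j2]]; exists (h1 + h2); split.
  by rewrite (leq_trans (size_polyD _ _)) // geq_max s1 s2.
by rewrite rmorphD opprD addrACA; apply: JD.
Qed.

Lemma LowZ n (c : K) y : Low n y -> Low n (c *: y).
Proof.
move=> [h [s1 j1]]; exists (c *: h); split.
  by rewrite (leq_trans (size_scale_leq _ _)).
by rewrite pbZ -scalerBr; apply: JZ.
Qed.

Lemma LowJ n y : J y -> Low n y.
Proof. by move=> hy; exists 0; rewrite size_poly0 rmorph0 subr0. Qed.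

Lemma Lowle n m y : (n <= m)%N -> Low n y -> Low m y.
Proof. by move=> hnm [h [s1 j1]]; exists h; split => //; apply: leq_trans hnm. Qed.

Lemma Lowpb n (h : {poly K}) : (size h <= n)%N -> Low n (pb h).
Proof. by move=> hs; exists h; split => //; rewrite subrr; apply: J0. Qed.

Lemma LowN n y : Low n y -> Low n (- y).
Proof. by move=> hy; rewrite -scaleN1r; apply: LowZ. Qed.

Lemma LowB n y z : Low n y -> Low n z -> Low n (y - z).
Proof. by move=> hy hz; apply: LowD => //; apply: LowN. Qed.

Lemma Lowb n y : Low n.-1 y -> Low n (b * y).
Proof.
move=> [h [s1 j1]].
have e : b * y - pb (h * 'X) = b * (y - pb h) by rewrite rmorphM /= horner_algX pbcomm mulrBr.
case: n s1 => [|n] s1.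
  apply: LowJ; move: s1; rewrite size_poly_leq0 => /eqP hh; move: j1.
  by rewrite hh rmorph0 subr0 => j1; apply: JM.
exists (h * 'X); split; last by rewrite e; apply: JM.
have [->|hn] := eqVneq h 0; first by rewrite mul0r size_poly0.
by rewrite size_mulX.
Qed.

Lemma Lowsum n (I : finType) (F : I -> A) : (forall i, Low n (F i)) -> Low n (\sum_i F i).
Proof.
move=> hF; apply: (big_ind (Low n)) => //; [by apply: LowJ; apply: J0 | exact: LowD].
Qed.

Lemma zid (V : zmodType) (x1 x2 b1 b2 b3 y : V) :
  x1 + x2 - (b1 + (b2 + b3)) = (x1 - (b1 + b2)) + (x2 - (b3 + y)) + y.
Proof.
rewrite !opprD !addrA -[RHS]addrA [- y + y]addrC subrr addr0.
rewrite -!addrA; congr (_ + _); rewrite !addrA; congr (_ + _).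
by rewrite -addrA addrC.
Qed.


Lemma zid2 (V : zmodType) (B P T H Y O : V) m :
  B - P + (T + H) *+ m - O = B - P + Y *+ m - O - (Y - T - H) *+ m.
Proof.
rewrite !mulrnBl mulrnDl !opprB addrAC -[RHS]addrA addrA.
rewrite [B - P + _ - O]addrAC -[RHS]addrA; congr (_ + _).
by rewrite addrCA [Y *+ m + _]addrCA subrr addr0 addrC.
Qed.

Lemma Mon n (p : {poly K}) :
  Low n.-1 (pa p * b ^+ n - (p.[1] *: b ^+ n + (p^`().[1] * n%:R) *: b ^+ n.-1)).
Proof.
elim: n p => [|n IH] p.
  by rewrite mulr0 scale0r addr0 mulr1; apply: LowJ; apply: Jpa.
set q := 'X ^+ r * p^`().
have E1 : pa p * b ^+ n.+1 = b * (pa p * b ^+ n) + pa q * b ^+ n.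
  by rewrite exprS mulrA CP mulrDl mulrA.
have Eq : q.[1] = p^`().[1] by rewrite hornerM hornerXn expr1n mul1r.
have Hb : forall c : K, b * ((c * n%:R) *: b ^+ n.-1) = (c * n%:R) *: b ^+ n.
  by case: (n) => [|m] c; rewrite ?mulr0 ?scale0r ?mulr0 // -scalerAr -exprS.
have Y3 : Low n ((q^`().[1] * n%:R) *: b ^+ n.-1).
  case: (n) => [|m]; first by rewrite mulr0 scale0r; apply: LowJ; apply: J0.
  apply: LowZ; rewrite -(horner_algX b) -rmorphXn; apply: Lowpb.
  by rewrite size_polyXn.
have Hs : p^`().[1] * n.+1%:R = p^`().[1] * n%:R + p^`().[1].
  by rewrite -addn1 natrD mulrDr mulr1.
rewrite /= E1 Hs scalerDl.
rewrite (zid _ _ _ _ _ ((q^`().[1] * n%:R) *: b ^+ n.-1)).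
apply: LowD => //; apply: LowD.
  have -> : b * (pa p * b ^+ n) - (p.[1] *: b ^+ n.+1 + (p^`().[1] * n%:R) *: b ^+ n) =
    b * (pa p * b ^+ n - (p.[1] *: b ^+ n + (p^`().[1] * n%:R) *: b ^+ n.-1)).
    by rewrite mulrBr mulrDr Hb -scalerAr -exprS.
  exact: Lowb.
by rewrite -Eq; apply: (Lowle (leq_pred n)); apply: IH.
Qed.


Definition F (p g : {poly K}) := pa p * pb g - pb (p.[1] *: g + p^`().[1] *: g^`()).

Lemma FD p g h : F p (g + h) = F p g + F p h.
Proof.
by rewrite /F rmorphD mulrDr derivD !scalerDr addrACA rmorphD opprD addrACA.
Qed.

Lemma FZ p (c : K) g : F p (c *: g) = c *: F p g.
Proof.
rewrite /F derivZ !scalerA [p.[1] * c]mulrC [p^`().[1] * c]mulrC -!scalerA -scalerDr.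
by rewrite !pbZ scalerBr scalerAr.
Qed.

Lemma F0 p : F p 0 = 0.
Proof. by rewrite /F deriv0 !scaler0 addr0 !rmorph0 mulr0 subr0. Qed.

Lemma FX p i : F p ('X ^+ i) =
  pa p * b ^+ i - (p.[1] *: b ^+ i + (p^`().[1] * i%:R) *: b ^+ i.-1).
Proof.
rewrite /F derivXn pbD !pbZ !rmorphXn /= rmorphMn /= rmorphXn /= !horner_algX.
by rewrite -scalerA scaler_nat.
Qed.

Lemma K4 (p g : {poly K}) : Low (size g).-2 (F p g).
Proof.
set n := size g.
have hg := coefK g; rewrite poly_def in hg.
rewrite -hg; apply: (big_ind (fun g => Low n.-2 (F p g))).
- by rewrite F0; apply: LowJ; apply: J0.
- by move=> g1 g2 h1 h2; rewrite FD; apply: LowD.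
move=> i _; rewrite FZ; apply: LowZ; rewrite FX.
apply: (Lowle _ (Mon i p)).
by have := ltn_ord i; lia.
Qed.


Lemma natK0 n : (n != 0)%N -> (n%:R : K) != 0.
Proof. by move=> hn; rewrite ((pcharf0P K).1 hK n). Qed.

Lemma mulrn_nz (x : K) n : x != 0 -> (n != 0)%N -> x *+ n != 0.
Proof. by move=> hx hn; rewrite -mulr_natr mulf_neq0 // natK0. Qed.

Lemma FXE g : F 'X g = a * pb g - pb g - pb g^`().
Proof.
by rewrite /F horner_algX derivX hornerX hornerC !scale1r pbD opprD addrA.
Qed.

Lemma K3 n (f : {poly K}) : (size f <= n)%N -> f != 0 -> exists c, J (c * pb f - 1).
Proof.
elim: n f => [|n IH] f hs hf.
  by move: hs; rewrite size_poly_leq0 (negbTE hf).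
have [hs1|hs2] := leqP (size f) 1.
  have hf0 : f`_0 != 0.
    by apply: contraNneq hf => h0; rewrite (size1_polyC hs1) h0 polyC0.
  exists ((f`_0)^-1)%:A; rewrite [in pb f](size1_polyC hs1) horner_algC.
  rewrite -scalerAl mul1r scalerA mulVf // scale1r subrr; exact: J0.
have [h [sh jh]] := K4 'X f.
set g := f^`() + h.
have hg0 : g`_(size f).-2 != 0.
  rewrite coefD (nth_default 0 (leq_trans sh (leqnn _))) addr0 coef_deriv.
  have -> : ((size f).-2).+1 = (size f).-1 by move: hs2; case: (size f) => [|[|m]].
  apply: mulrn_nz; last by move: hs2; case: (size f) => [|[|m]].
  by rewrite -lead_coefE lead_coef_eq0.
have hgs : (size g < size f)%N.
  rewrite /g; apply: leq_ltn_trans (size_polyD _ _) _; rewrite gtn_max lt_size_deriv //=.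
  by apply: (leq_ltn_trans sh); move: hs2; case: (size f) => [|[|m]].
have hgn : (size g <= n)%N by rewrite -ltnS (leq_trans hgs hs).
have g0 : g != 0 by apply/eqP => hg; move: hg0; rewrite hg coef0 eqxx.
have [c' hc'] := IH g hgn g0.
exists (c' * (a - 1)).
have -> : c' * (a - 1) * pb f - 1 = c' * (F 'X f - pb h) + (c' * pb g - 1).
  rewrite FXE /g pbD.
  have e : a * pb f - pb f - pb f^`() - pb h = (a * pb f - pb f) - (pb f^`() + pb h).
    by rewrite opprD addrA.
  by rewrite e -mulrA mulrBl mul1r [c' * (_ - (_ + _))]mulrBr addrA subrK.
by apply: JD => //; apply: JM.
Qed.


Lemma pbB (g h : {poly K}) : pb (g - h) = pb g - pb h.
Proof. exact: rmorphB. Qed.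

Lemma pbXM (g : {poly K}) : pb ('X * g) = b * pb g.
Proof. by rewrite rmorphM /= horner_algX. Qed.

Lemma RC y z : y * a = z * a -> y = z.
Proof.
move=> e; apply/eqP; rewrite -subr_eq0; apply/eqP.
have [p hp] := hsurj (y - z).
have h0 : oe (map_poly (fun q => q * 'X) p) = oe 0.
  by rewrite oeMr horner_algX -hp mulrBl e subrr oe0.
have hp0 : p = 0.
  apply/polyP => j; have := congr1 (fun P : {poly {poly K}} => P`_j) (hinj h0) => /=.
  rewrite coef_map_id0 ?mul0r // coef0 => /eqP; rewrite mulf_eq0 polyX_eq0 orbF.
  by move/eqP ->.
by rewrite hp hp0 oe0.
Qed.

Variable sigma : A -> A.
Hypothesis hsigma : forall y : A, a * y = sigma y * a.

Lemma iterS m : iter m sigma (b - 1) = b - 1 + m%:R * a ^+ r.-1.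
Proof.
have ta : a * a ^+ r.-1 = a ^+ r by rewrite -exprS prednK.
have at' : a ^+ r.-1 * a = a ^+ r by rewrite -exprSr prednK.
elim: m => [|m IH]; first by rewrite mul0r addr0.
apply: RC; rewrite /= -hsigma IH mulrDr mulrBr mulr1 hab.
rewrite mulrA (commr_nat a m) -mulrA ta.
rewrite !mulrDl mulN1r -mulrA at' -addn1 natrD mulrDl mul1r.
by rewrite -!addrA; congr (_ + _); rewrite addrCA; congr (_ + _); rewrite addrC.
Qed.

Lemma Apart2 m : ~ exists c, J (iter m sigma (b - 1) * c - 1).
Proof.
move=> [c hc]; rewrite iterS in hc.
set xm := b - 1 + m%:R * a ^+ r.-1 in hc.
have [f hf] := K2 c.
have h1 : J (xm * pb f - 1).
  have -> : xm * pb f - 1 = (xm * c - 1) - xm * (c - pb f).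
    by rewrite mulrBr opprB [RHS]addrC addrA subrK.
  by apply: JB => //; apply: JM.
set p : {poly K} := 'X ^+ r.-1.
have [h [sh jh]] := K4 p f.
set G := 'X * f - f + m%:R *: (p.[1] *: f + p^`().[1] *: f^`() + h) - 1.
have hG : J (pb G).
  have -> : pb G = (xm * pb f - 1) - m%:R *: (F p f - pb h).
    have eT : F p f = a ^+ r.-1 * pb f - pb (p.[1] *: f + p^`().[1] *: f^`()).
      by rewrite /F /p rmorphXn /= horner_algX.
    have exm : xm * pb f = b * pb f - pb f + (a ^+ r.-1 * pb f) *+ m.
      by rewrite /xm !mulrDl mulN1r -mulrA mulr_natl.
    rewrite eT exm /G pbB pbD pbB pbXM pbZ (pbD _ h) rmorph1 !scaler_nat.
    exact: zid2.
  by apply: JB => //; apply: JZ.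
have := K1 hG; apply/eqP.
have hsh : (size h <= size f)%N by apply: leq_trans sh _; rewrite -subn2 leq_subr.
apply/eqP => /(congr1 (fun P : {poly K} => P`_(size f))).
rewrite /G !(coefB, coefD, coefZ, coefN) coefXM coef1 coef_deriv.
rewrite !(nth_default 0 (leqnn (size f))) (nth_default 0 (leqnSn (size f))).
rewrite (nth_default 0 hsh) ?(mulr0, mul0rn, oppr0, addr0, subr0).
case e: (size f) => [|k] /=.
  by rewrite coef0 => /eqP; rewrite sub0r oppr_eq0 oner_eq0.
rewrite subr0 coef0 => h0.
have : lead_coef f == 0 by rewrite lead_coefE e /= h0.
by rewrite lead_coef_eq0 => /eqP hf0; move: e; rewrite hf0 size_poly0.
Qed.


Lemma Amax : maximal_left_ideal J.
Proof.
split; first by split; [exact: J0 | split; [exact: JD | exact: JM]].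
split.
  move=> h1; have : J (pb 1) by rewrite rmorph1.
  by move/K1/eqP; rewrite oner_eq0.
move=> I' [I0 [ID IM]] hJI.
have [[u [hu nu]]|hno] := classic (exists u, I' u /\ ~ J u).
  right; have [f hf] := K2 u.
  have f0 : f != 0.
    by apply/eqP => f0; apply: nu; move: hf; rewrite f0 rmorph0 subr0.
  have [c hc] := K3 (leqnn (size f)) f0.
  have h1 : I' (c * u - 1).
    apply: hJI; have -> : c * u - 1 = c * (u - pb f) + (c * pb f - 1).
      by rewrite mulrBr addrA subrK.
    by apply: JD => //; apply: JM.
  have i1 : I' 1.
    have -> : (1 : A) = c * u + (-1) * (c * u - 1) by rewrite mulN1r opprB addrC subrK.
    by apply: ID; [apply: IM | apply: IM].
  by move=> v; rewrite -[v]mulr1; apply: IM.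
left=> v; split; last exact: hJI.
move=> hv; apply: NNPP => nv; apply: hno; by exists v.
Qed.

Lemma oeMb (q : {poly {poly K}}) :
  oe q * b = oe (q * 'X + map_poly (fun s : {poly K} => ('X ^+ r * s^`())%R) q).
Proof.
rewrite oeD oeMX.
have h1 : (size (map_poly (fun s : {poly K} => ('X ^+ r * s^`())%R) q) <= size q)%N.
  apply/leq_sizeP => j hj; rewrite coef_map_id0 ?deriv0 ?mulr0 //.
  by rewrite nth_default // deriv0 mulr0.
rewrite (oeE h1) /ore_elt mulr_suml mulr_sumr -big_split /=; apply: eq_bigr => i _.
rewrite coef_map_id0 ?deriv0 ?mulr0 // -mulrA CP mulrDr mulrA.
by rewrite -exprSr exprS mulrA.
Qed.

Variable (N : lmodType A) (e : N).
Hypothesis hN : is_quot_by (b - 1) e.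

Local Notation pe p := (pa p *: e).

Lemma be : b *: e = e.
Proof.
have : (b - 1) *: e = 0 by apply/(hN.2 (b - 1)); exists 1; rewrite mul1r.
by rewrite scalerBl scale1r => /eqP; rewrite subr_eq0 => /eqP.
Qed.

Lemma peD p q : pe (p + q) = pe p + pe q.
Proof. by rewrite rmorphD scalerDl. Qed.

Lemma peB p q : pe (p - q) = pe p - pe q.
Proof. by rewrite rmorphB scalerBl. Qed.

Lemma peM (s p : {poly K}) : pa s *: pe p = pe (s * p).
Proof. by rewrite scalerA rmorphM. Qed.

Lemma bpe p : b *: pe p = pe (p - 'X ^+ r * p^`()).
Proof.
have hc : b * pa p = pa p * b - pa ('X ^+ r * p^`()) by rewrite CP addrK.
by rewrite scalerA hc scalerBl -scalerA be peB.
Qed.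

Lemma N1 (n : N) : exists p, n = pe p.
Proof.
have [c ->] := hN.1 n; have [q ->] := hsurj c.
rewrite /ore_elt scaler_suml; apply: (big_ind (fun n => exists p, n = pe p)).
- by exists 0; rewrite rmorph0 scale0r.
- by move=> x y [p1 ->] [p2 ->]; exists (p1 + p2); rewrite peD.
move=> j _; rewrite -scalerA.
move: (q`_j) => p0.
elim: (nat_of_ord j) => [|k [p2 hp2]]; first by exists p0; rewrite expr0 scale1r.
by exists (p2 - 'X ^+ r * p2^`()); rewrite exprS -scalerA hp2 bpe.
Qed.

Lemma N2 p : pe p = 0 -> p = 0.
Proof.
move/(hN.2 _) => [c hc]; have [q hq] := hsurj c.
have e1 : oe p%:P = oe (q * 'X + map_poly (fun s : {poly K} => ('X ^+ r * s^`())%R) q - q).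
  by rewrite oeC hc hq mulrBr mulr1 oeMb [RHS]oeD oeN.
have /(congr1 (fun P : {poly {poly K}} => P`_(size q))) := hinj e1.
rewrite coefC !(coefB, coefD) coefMX coef_map_id0 ?deriv0 ?mulr0 //.
rewrite !(nth_default 0 (leqnn (size q))) deriv0 mulr0 addr0 subr0.
case es: (size q) => [|k] /=.
  by [].
move=> h0; have : lead_coef q == 0 by rewrite lead_coefE es /= -h0.
by rewrite lead_coef_eq0 => /eqP hq0; move: es; rewrite hq0 size_poly0.
Qed.


Lemma deriv0_size (f : {poly K}) : f^`() = 0 -> (size f <= 1)%N.
Proof.
move=> hd; rewrite leqNgt; apply/negP => hs.
have : f^`()`_(size f).-2 != 0.
  rewrite coef_deriv; have -> : ((size f).-2).+1 = (size f).-1.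
    by move: hs; case: (size f) => [|[|k]].
  apply: mulrn_nz; last by move: hs; case: (size f) => [|[|k]].
  rewrite -lead_coefE lead_coef_eq0; apply/eqP => f0; move: hs; rewrite f0 size_poly0.
  by [].
by rewrite hd coef0 eqxx.
Qed.

Lemma monom (g : {poly K}) : g != 0 -> g %| 'X ^+ r * g^`() ->
  exists m (c : K), c != 0 /\ g = c *: 'X ^+ m.
Proof.
move=> g0 hd.
have [m [u hu eg]] := multiplicity_XsubC g 0.
rewrite g0 /= in hu; rewrite polyC0 subr0 in eg.
have u0 : u != 0 by apply: contraNneq hu => ->; rewrite root0.
have Xm0 : 'X ^+ m != 0 :> {poly K} by rewrite expf_neq0 // polyX_eq0.
have ed : 'X ^+ r * g^`() = ('X ^+ r * u^`() + (u * 'X ^+ r.-1) *+ m) * 'X ^+ m.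
  rewrite eg derivM derivXn mulrDr mulrDl mulrA; congr (_ + _).
  case: m {eg Xm0} => [|m]; first by rewrite !mulr0n !mulr0 mul0r.
  rewrite /= !mulrnAr mulrnAl; congr (_ *+ _).
  rewrite mulrCA -!mulrA -!exprD /=; congr (_ * _); congr (_ ^+ _).
  by rewrite addnS -addSn prednK.
rewrite ed eg dvdp_mul2r // dvdp_addl in hd; last first.
  by rewrite -mulrnAr dvdp_mulIl.
rewrite Gauss_dvdpr in hd; last first.
  by apply: coprimep_expr; have := coprimep_XsubC u 0; rewrite polyC0 subr0 => ->.
have ud : u^`() = 0.
  apply/eqP; apply: contraT => hne.
  have := dvdp_leq hne hd; rewrite leqNgt (lt_size_deriv u0) //.
have hs := deriv0_size ud.
have eu := size1_polyC hs; move: (u`_0) eu => c0 eu.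
exists m, c0; split; last by rewrite eg eu mul_polyC.
by apply: contraNneq u0 => h0; rewrite eu h0 polyC0.
Qed.


Lemma paXn m : pa ('X ^+ m) = a ^+ m.
Proof. by rewrite rmorphXn /= horner_algX. Qed.

Lemma paZ (c : K) (p : {poly K}) : pa (c *: p) = c *: pa p.
Proof. by rewrite -mul_polyC rmorphM /= horner_algC mulr_algl. Qed.

Lemma SU c : exists c', a * c' = c * a.
Proof.
pose P := fun x : A => exists c', a * c' = x * a.
have PM : forall x y, P x -> P y -> P (x * y).
  by move=> x y [x' hx] [y' hy]; exists (x' * y'); rewrite mulrA hx -mulrA hy mulrA.
have Pb : P b.
  exists (b - a ^+ r.-1); rewrite mulrBr hab -exprS prednK //; exact: addrK.
have Pbj : forall j, P (b ^+ j).
  elim=> [|j IH]; first by exists 1; rewrite mulr1 expr0 mul1r.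
  by rewrite exprS; apply: PM.
have Ppa : forall s, P (pa s).
  move=> s; exists (pa s).
  have h1 : pa ('X * s) = a * pa s by rewrite rmorphM /= horner_algX.
  have h2 : pa (s * 'X) = pa s * a by rewrite rmorphM /= horner_algX.
  by rewrite -h1 -h2 mulrC.
have [p ->] := hsurj c; rewrite /ore_elt; apply: (big_ind P).
- by exists 0; rewrite mulr0 mul0r.
- by move=> x y [x' hx] [y' hy]; exists (x' + y'); rewrite mulrDr mulrDl hx hy.
by move=> j _; apply: PM.
Qed.

Lemma SUm m c : exists c', a ^+ m * c' = c * a ^+ m.
Proof.
elim: m c => [|m IH] c; first by exists c; rewrite expr0 mulr1 mul1r.
have [c1 h1] := IH c; have [c2 h2] := SU c1.
by exists c2; rewrite exprSr -mulrA h2 mulrA h1 mulrA.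
Qed.

Lemma IS1 m y : a ^+ m * y = iter m sigma y * a ^+ m.
Proof.
elim: m y => [|m IH] y; first by rewrite expr0 mul1r mulr1.
by rewrite exprS -mulrA IH mulrA hsigma /= -mulrA -exprS.
Qed.

Lemma SM m : submodule (smul_sub (a ^+ m) : N -> Prop).
Proof.
split; first by exists 0; rewrite scaler0.
split; first by move=> u v [x ->] [y ->]; exists (x + y); rewrite scalerDr.
move=> c u [v ->]; have [c' hc'] := SUm m c.
by exists (c' *: v); rewrite scalerA -hc' scalerA.
Qed.

Lemma Desc m (u : N) : smul_sub (a ^+ m.+1) u -> smul_sub (a ^+ m) u.
Proof. by move=> [v ->]; exists (a *: v); rewrite exprSr scalerA. Qed.

Lemma ameq m : a ^+ m *: e = pe ('X ^+ m).
Proof. by rewrite paXn. Qed.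

Lemma Strict m : ~ smul_sub (a ^+ m.+1) (a ^+ m *: e).
Proof.
move=> [v hv]; have [q hq] := N1 v.
move: hv; rewrite hq ameq -paXn peM => /eqP; rewrite -subr_eq0 -peB => /eqP /N2 /eqP.
rewrite subr_eq0 => /eqP /(congr1 (fun P : {poly K} => P`_m)).
by rewrite coefXn coefXnM ltnSn eqxx => /eqP; rewrite oner_eq0.
Qed.

Lemma amne0 m : a ^+ m *: e != 0.
Proof.
rewrite ameq; apply/eqP => /N2 /eqP; apply/negP; by rewrite expf_neq0 // polyX_eq0.
Qed.


Lemma ex_min (P : {poly K} -> Prop) : (exists p, P p /\ p != 0) ->
  exists g, [/\ P g, g != 0 & forall p, P p -> p != 0 -> (size g <= size p)%N].
Proof.
move=> [p [hp p0]].
suff H : forall n q, P q -> q != 0 -> (size q <= n)%N ->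
  exists g, [/\ P g, g != 0 & forall p, P p -> p != 0 -> (size g <= size p)%N].
  exact: (H (size p) p).
elim=> [|n IH] q hq q0 hs.
  by move: hs; rewrite size_poly_leq0 (negbTE q0).
have [[q' [hq' [q0' hs']]]|hno] := classic (exists q', P q' /\ q' != 0 /\ (size q' <= n)%N).
  exact: (IH q').
exists q; split => // p' hp' p0'; rewrite leqNgt; apply/negP => hlt.
by apply: hno; exists p'; split => //; split => //; rewrite -ltnS (leq_trans hlt hs).
Qed.

Lemma N3 (S : N -> Prop) : submodule S -> (exists u, S u /\ u <> 0) ->
  exists m, forall u, S u <-> smul_sub (a ^+ m) u.
Proof.
move=> [S0 [SD SZ]] [u [hu u0]].
pose I := fun p : {poly K} => S (pe p).
have INZ : exists p, I p /\ p != 0.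
  have [p hp] := N1 u; exists p; split; first by rewrite /I -hp.
  by apply/eqP => p0; apply: u0; rewrite hp p0 rmorph0 scale0r.
have IB : forall p q, I p -> I q -> I (p - q).
  move=> p q hp hq; rewrite /I peB -scaleN1r; apply: (SD) => //; exact: (SZ).
have IM : forall s p, I p -> I (s * p).
  by move=> s p hp; rewrite /I -peM; apply: (SZ).
have [g [hg g0 gmin]] := ex_min INZ.
have hdiv : forall p, I p -> g %| p.
  move=> p hp; apply/modp_eq0P.
  have em : p %% g = p - p %/ g * g by rewrite {2}(divp_eq p g) addrAC subrr add0r.
  have hm : I (p %% g) by rewrite em; apply: (IB) => //; apply: (IM).
  apply/eqP; apply: contraT => hne.
  by have := gmin _ hm hne; rewrite leqNgt ltn_modp g0.
have hD : I ('X ^+ r * g^`()).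
  have e1 : pe ('X ^+ r * g^`()) = pe g + (-1) *: (b *: pe g).
    by rewrite bpe peB scaleN1r opprB addrC subrK.
  by rewrite /I e1; apply: (SD) => //; apply: (SZ); apply: (SZ).
have [m [c [c0 eg]]] := monom g0 (hdiv _ hD).
exists m => v; split.
  move=> hv; have [p hp] := N1 v.
  have : g %| p by apply: hdiv; rewrite /I -hp.
  rewrite eg dvdpZl // => /divpK ep.
  exists (pe (p %/ 'X ^+ m)); by rewrite hp -{1}ep mulrC -peM paXn.
move=> [w ->]; have [c1 ->] := hN.1 w.
rewrite scalerA IS1 -scalerA; apply: (SZ).
have -> : a ^+ m *: e = (c^-1)%:A *: pe g.
  by rewrite scalerA mulr_algl -paZ eg scalerA mulVf // scale1r paXn.
by apply: (SZ).
Qed.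


Lemma DescLe k m (u : N) : (k <= m)%N -> smul_sub (a ^+ m) u -> smul_sub (a ^+ k) u.
Proof.
move=> hkm; rewrite -(subnK hkm); elim: (m - k)%N u => [|d IH] u; first by rewrite add0n.
by rewrite addSn => /Desc /IH.
Qed.

Lemma natr_neq m i : m != i -> (m%:R - i%:R : K) != 0.
Proof.
move=> hmi; case: (leqP i m) => h.
  by rewrite -natrB // natK0 // subn_eq0 -ltnNge ltn_neqAle eq_sym hmi h.
rewrite -oppr_eq0 opprB -natrB ?natK0 ?subn_eq0 -?ltnNge //; exact: ltnW.
Qed.

Lemma smul_gen m (u : N) : smul_sub (a ^+ m) u -> exists c, u = c *: (a ^+ m *: e).
Proof.
by move=> [v ->]; have [c ->] := hN.1 v; exists (iter m sigma c); rewrite !scalerA IS1.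
Qed.

Lemma Iso m n : m <> n ->
  ~ submod_iso (smul_sub (a ^+ m) : N -> Prop) (smul_sub (a ^+ n)).
Proof.
move=> mn [f [fD [fZ [fT [fI fS]]]]].
have [Sm0 [SmD SmZ]] := SM m.
have hSm : smul_sub (a ^+ m) (a ^+ m *: e) by exists e.
have f0 : f 0 = 0.
  have := fD 0 0 Sm0 Sm0; rewrite addr0 -{1}[f 0]addr0 => /addrI h; by rewrite -h.
set w := f (a ^+ m *: e).
have w0 : w != 0.
  apply/eqP => hw; have : f (a ^+ m *: e) = f 0 by rewrite f0.
  by move/(fI _ _ hSm Sm0) => /eqP; rewrite (negbTE (amne0 m)).
set xm := b - 1 + m%:R * a ^+ r.-1.
have hx : xm *: w = 0.
  have h1 : xm *: (a ^+ m *: e) = 0.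
    rewrite scalerA /xm -iterS -IS1 -scalerA.
    have -> : (b - 1) *: e = 0 by apply/(hN.2 (b - 1)); exists 1; rewrite mul1r.
    by rewrite scaler0.
  by rewrite /w -fZ // h1 f0.
have [v hv] := fT _ hSm; have [s hs] := N1 v.
set q := 'X ^+ n * s.
have wq : w = pe q by rewrite /w hv hs -paXn peM.
have q0 : q != 0 by apply: contraNneq w0 => h; rewrite wq h rmorph0 scale0r.
have eq1 : xm *: pe q = pe (m%:R *: ('X ^+ r.-1 * q) - 'X ^+ r * q^`()).
  rewrite /xm !scalerDl scaleN1r bpe.
  have e2 : (m%:R * a ^+ r.-1) *: pe q = pe (m%:R *: ('X ^+ r.-1 * q)).
    have hpq : pa ('X ^+ r.-1 * q) = a ^+ r.-1 * pa q by rewrite [pa (_ * q)]rmorphM /= paXn.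
    by rewrite scalerA paZ scaler_nat hpq -mulrA mulr_natl.
  by rewrite e2 !peB [pe q - _ - _]addrAC subrr add0r addrC.
have hq : m%:R *: q = 'X * q^`().
  move: hx; rewrite wq eq1 => /N2 /eqP; rewrite subr_eq0 => /eqP.
  rewrite -{2}(prednK hr) exprS scalerAr ['X * _]mulrC -mulrA => /mulfI -> //.
  by rewrite expf_neq0 // polyX_eq0.
have qc : forall i, i != m -> q`_i = 0.
  move=> i hi; have := congr1 (fun P : {poly K} => P`_i) hq => /=.
  rewrite coefZ coefXM; case: i hi => [|i] hi /=.
    have hm0 : (m != 0)%N by rewrite eq_sym.
    by move/eqP; rewrite mulf_eq0 (negbTE (natK0 hm0)) /= => /eqP.
  rewrite coef_deriv => /eqP; rewrite -[q`_i.+1 *+ i.+1]mulr_natr -subr_eq0 mulrC -mulrBr mulf_eq0.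
  have hmi : m != i.+1 by rewrite eq_sym.
  by rewrite (negbTE (natr_neq hmi)) orbF => /eqP.
have qm : q`_m != 0.
  apply: contraNneq q0 => hm; apply/eqP/polyP => i; rewrite coef0.
  by case: (eqVneq i m) => [->|hi]; [exact: hm | exact: qc].
have nm : (n < m)%N.
  rewrite ltn_neqAle; apply/andP; split; first by apply/eqP => h; apply: mn.
  by move: qm; rewrite /q coefXnM; case: ltnP => //; rewrite eqxx.
have eqm : q = q`_m *: 'X ^+ m.
  apply/polyP => i; rewrite coefZ coefXn.
  by case: (eqVneq i m) => [->|hi]; rewrite ?mulr1 // mulr0 qc.
have [u [hu fu]] := fS (a ^+ n *: e) (ex_intro _ e erefl).
have [c hc] := smul_gen hu.
have : smul_sub (a ^+ m) (a ^+ n *: e).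
  rewrite -fu hc fZ // -/w wq eqm paZ -mulr_algl -scalerA -ameq.
  by apply: (SmZ); apply: (SmZ).
move/(DescLe nm); exact: Strict.
Qed.

End Ore.

Unset Implicit Arguments. Set Strict Implicit.

Theorem proposition3p5 (K : fieldType) (hK : [pchar K] =i pred0)
  (r : nat) (hr : (1 <= r)%N)
  (A : algType K) (a b : A) (hA : is_ore_ext r a b)
  (sigma : A -> A) (hsigma : forall y : A, a * y = sigma y * a)
  (N : lmodType A) (e : N) (hN : is_quot_by (b - 1) e) :
  let J := lprinc (a - 1) in
  let x := b - 1 in
  (* (a) *)
  (maximal_left_ideal J /\
   forall m : nat, ~ exists c : A, J (iter m sigma x * c - 1)) /\
  (* (b) *)
  (~ artinian N /\
   (forall S : N -> Prop, submodule S ->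
      ((exists u, S u /\ u <> 0) <->
       exists m : nat, forall u, S u <-> smul_sub (a ^+ m) u)) /\
   (forall m : nat, submodule (smul_sub (a ^+ m) : N -> Prop)) /\
   (forall m : nat,
      (forall u : N, smul_sub (a ^+ m.+1) u -> smul_sub (a ^+ m) u) /\
      exists u : N, smul_sub (a ^+ m) u /\ ~ smul_sub (a ^+ m.+1) u)) /\
  (* (c) *)
  (forall m n : nat, m <> n ->
     ~ submod_iso (smul_sub (a ^+ m) : N -> Prop) (smul_sub (a ^+ n))).
Proof.
move=> J x; case: hA => hab [hinj hsurj].
split.
  split; first exact: (Amax hK hr hab hinj hsurj).
  by move=> m; exact: (Apart2 hr hab hinj hsurj hsigma).
split; last first.
  by move=> m n mn; exact: (Iso hK hr hab hinj hsurj hsigma hN mn).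
have SMm := SM hr hab hsurj N.
have St := fun m => Strict hab hinj hsurj hN (m:=m).
split.
  move=> H; have [k0 hk] := H (fun k => smul_sub (a ^+ k)) SMm (fun k u => @Desc _ _ a N k u).
  have := (hk k0.+1 (leqnSn k0) (a ^+ k0 *: e)).2 (ex_intro _ e erefl).
  exact: St.
split.
  move=> S hS; split.
    exact: (N3 hK hr hab hsurj hsigma hN hS).
  move=> [m hm]; exists (a ^+ m *: e); split; first by apply/hm; exists e.
  by apply/eqP; exact: (amne0 hab hinj hsurj hN m).
split; first exact: SMm.
move=> m; split; first by move=> u; exact: Desc.
by exists (a ^+ m *: e); split; [exists e | exact: St].
Qed.
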